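(* Let $N=\{1,\ldots,n\}$, let $\mathscr{B}\in\mathfrak{B}^*(n)$ and let $\mathscr{F}=\{v\in\mathscr{BG}(n):\sum_{S\in\mathscr{B}}\lambda^{\mathscr{B}}_Sv(S)=v(N)\}$ be the corresponding facet of $\mathscr{BG}(n)$. Then: (1) if $|\mathscr{B}|=n$, every game in $\mathscr{F}$ has a core reduced to a single point; (2) otherwise, no game in the relative interior of $\mathscr{F}$ has a core reduced to a single point.
   Context: A game on $N$ is a map $v:2^N\to\mathbb{R}$ with $v(\varnothing)=0$, identified with a vector in $\mathbb{R}^{2^N\setminus\{\varnothing\}}$. The core is $C(v)=\{x\in\mathbb{R}^N:\sum_{i\in S}x_i\geqslant v(S)\ \forall S\subseteq N,\ \sum_{i\in N}x_i=v(N)\}$. A collection $\mathscr{B}$ of nonempty subsets of $N$ is balanced if there exist positive weights $(\lambda_S)_{S\in\mathscr{B}}$ with $\sum_{S\in\mathscr{B},S\ni i}\lambda_S=1$ for all $i\in N$; minimal balanced if no proper subcollection is balanced, with unique weights $\lambda^{\mathscr{B}}_S$. $\mathfrak{B}^*(n)$ is the set of minimal balanced collections other than $\{N\}$. $\mathscr{BG}(n)=\{v:\sum_{S\in\mathscr{B}}\lambda^{\mathscr{B}}_Sv(S)\leqslant v(N)\ \forall\mathscr{B}\in\mathfrak{B}^*(n)\}$ is the cone of balanced games (those with nonempty core). *)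

(* Defs.v *)
From mathcomp Require Import all_boot all_order all_algebra.
Set Implicit Arguments. Unset Strict Implicit. Unset Printing Implicit Defensive.
Import Order.TTheory GRing.Theory Num.Theory.
Local Open Scope ring_scope.

(* N = 'I_n ; a game is a vector indexed by subsets of N, with v(set0) = 0 *)
Definition game (R : realFieldType) (n : nat) := {ffun {set 'I_n} -> R}.

Definition balancing_weights (R : realFieldType) (n : nat)
  (B : {set {set 'I_n}}) (lam : {set 'I_n} -> R) : Prop :=
  (forall S, S \in B -> 0 < lam S) /\
  (forall i : 'I_n, \sum_(S in B | i \in S) lam S = 1).

Definition balanced (R : realFieldType) (n : nat) (B : {set {set 'I_n}}) : Prop :=
  set0 \notin B /\ exists lam : {set 'I_n} -> R, balancing_weights B lam.

Definition minimal_balanced (R : realFieldType) (n : nat) (B : {set {set 'I_n}}) : Prop :=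
  balanced R B /\ forall C : {set {set 'I_n}}, C \proper B -> ~ balanced R C.

Definition Bstar (R : realFieldType) (n : nat) (B : {set {set 'I_n}}) : Prop :=
  minimal_balanced R B /\ B != [set [set: 'I_n]].

(* the cone BG(n) of balanced games; weights of minimal balanced collections
   are unique, so quantifying over all balancing weights is the same as using
   lambda^B *)
Definition BG (R : realFieldType) (n : nat) (v : game R n) : Prop :=
  v set0 = 0 /\
  forall (B : {set {set 'I_n}}) (lam : {set 'I_n} -> R),
    Bstar R B -> balancing_weights B lam ->
    \sum_(S in B) lam S * v S <= v [set: 'I_n].

Definition facet (R : realFieldType) (n : nat) (B : {set {set 'I_n}})
  (lam : {set 'I_n} -> R) (v : game R n) : Prop :=
  BG v /\ \sum_(S in B) lam S * v S = v [set: 'I_n].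

Definition in_core (R : realFieldType) (n : nat) (v : game R n)
  (x : {ffun 'I_n -> R}) : Prop :=
  (forall S : {set 'I_n}, v S <= \sum_(i in S) x i) /\
  \sum_(i in [set: 'I_n]) x i = v [set: 'I_n].

Definition core_single_point (R : realFieldType) (n : nat) (v : game R n) : Prop :=
  exists x : {ffun 'I_n -> R}, forall y, in_core v y <-> y = x.

Definition in_aff_hull (R : realFieldType) (n : nat) (P : game R n -> Prop)
  (w : game R n) : Prop :=
  exists (m : nat) (c : 'I_m -> R) (u : 'I_m -> game R n),
    (forall k, P (u k)) /\ \sum_(k < m) c k = 1 /\
    (forall S, w S = \sum_(k < m) c k * u k S).

Definition rel_interior (R : realFieldType) (n : nat) (P : game R n -> Prop)
  (v : game R n) : Prop :=
  P v /\ exists eps : R, 0 < eps /\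
    forall w, in_aff_hull P w -> (forall S, `|w S - v S| < eps) -> P w.

(* Main.v *)
Require Import Defs.
From mathcomp Require Import all_boot all_order all_algebra.
From Stdlib Require Import Classical.
From mathcomp Require Import ring lra.
Import Order.TTheory GRing.Theory Num.Theory.
Set Implicit Arguments. Unset Strict Implicit. Unset Printing Implicit Defensive.
Local Open Scope ring_scope.

Section S.
Variable R : realFieldType.
Variable n : nat.
Implicit Types (D B C W : {set {set 'I_n}}) (T : {set 'I_n}).

Definition chi (S : {set 'I_n}) : 'rV[R]_n := \row_i (i \in S)%:R.

Lemma sum_chiE D (c : {set 'I_n} -> R) i :
  (\sum_(S in D) c S *: chi S) 0 i = \sum_(S in D | i \in S) c S.
Proof.
rewrite summxE big_mkcondr /=; apply: eq_bigr => S _; rewrite !mxE.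
by case: (i \in S); rewrite ?mulr1 ?mulr0.
Qed.

Definition dot (u d : 'rV[R]_n) : R := (u *m d^T) 0 0.

Lemma dotE u d : dot u d = \sum_i u 0 i * d 0 i.
Proof. by rewrite /dot mxE; apply: eq_bigr => i _; rewrite mxE. Qed.

Lemma dot_chi (S : {set 'I_n}) d : dot (chi S) d = \sum_(i in S) d 0 i.
Proof.
rewrite dotE [RHS]big_mkcond /=; apply: eq_bigr => i _; rewrite mxE.
by case: (i \in S); rewrite ?mul1r ?mul0r.
Qed.

Lemma dot_sum D (c : {set 'I_n} -> R) d :
  dot (\sum_(S in D) c S *: chi S) d = \sum_(S in D) c S * dot (chi S) d.
Proof.
rewrite /dot mulmx_suml summxE; apply: eq_bigr => S _.
by rewrite -scalemxAl mxE.
Qed.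

Lemma bal_sum D w (x : {ffun 'I_n -> R}) :
  (forall i : 'I_n, \sum_(S in D | i \in S) w S = 1) ->
  \sum_(S in D) w S * (\sum_(i in S) x i) = \sum_i x i.
Proof.
move=> Hw.
transitivity (\sum_(S in D) \sum_i (if i \in S then w S * x i else 0)).
  apply: eq_bigr => S _; rewrite mulr_sumr big_mkcond /=.
  by apply: eq_bigr => i _; case: (i \in S).
rewrite exchange_big /=; apply: eq_bigr => i _.
rewrite -big_mkcondr /= -mulr_suml Hw mul1r //.
Qed.


Lemma ratio_min (X : finType) (D : {set X}) (w c : X -> R) :
  (forall S, S \in D -> 0 < w S) -> (exists2 S, S \in D & c S < 0) ->
  exists s, [/\ 0 < s, (forall S, S \in D -> 0 <= w S + s * c S) &
    exists2 S0, S0 \in D & w S0 + s * c S0 = 0].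
Proof.
move=> wpos [S1 S1D cS1].
pose P := fun S => (S \in D) && (c S < 0).
have PS1 : P S1 by rewrite /P S1D cS1.
case: (arg_minP (fun S => w S / - c S) PS1) => S0 /andP[S0D cS0] Hmin.
have ncS0 : 0 < - c S0 by rewrite oppr_gt0.
exists (w S0 / - c S0); split.
- by rewrite divr_gt0 // wpos.
- move=> S SD; case: (ltrP (c S) 0) => cS.
    have := Hmin S; rewrite /P SD cS => /(_ isT).
    have ncS : 0 < - c S by rewrite oppr_gt0.
    rewrite ler_pdivlMr // => H.
    by rewrite mulrN -subr_ge0 opprK in H.
  apply: addr_ge0; first exact: ltW (wpos _ SD).
  by apply: mulr_ge0 => //; apply: ltW; rewrite divr_gt0 // wpos.
- exists S0 => //.
  rewrite invrN mulrN mulNr -mulrA mulVf ?mulr1 ?subrr //.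
  by rewrite lt_eqF.
Qed.

Lemma sum_restrict (X : finType) (C D : {set X}) (P : pred X) (g : X -> R) :
  C \subset D ->
  \sum_(S in D | P S) (if S \in C then g S else 0) = \sum_(S in C | P S) g S.
Proof.
move=> CD; rewrite big_mkcond [RHS]big_mkcond /=; apply: eq_bigr => S _.
case SC: (S \in C); case SD: (S \in D) => //=; try by case: (P S).
by rewrite (subsetP CD) in SD.
Qed.

Lemma sum_drop0 (X : finType) (D : {set X}) (P : pred X) (f : X -> R) :
  \sum_(S in [set S in D | f S != 0] | P S) f S = \sum_(S in D | P S) f S.
Proof.
rewrite big_mkcond [RHS]big_mkcond /=; apply: eq_bigr => S _.
rewrite inE; case: (S \in D) => //=; case: eqP => //= ->.
by case: (P S).
Qed.

Lemma sum_drop0' (X : finType) (D : {set X}) (f g : X -> R) :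
  \sum_(S in [set S in D | f S != 0]) f S * g S = \sum_(S in D) f S * g S.
Proof.
rewrite big_mkcond [RHS]big_mkcond /=; apply: eq_bigr => S _.
rewrite inE; case: (S \in D) => //=; case: eqP => //= ->.
by rewrite mul0r.
Qed.


Lemma sum_restrict0 (X : finType) (C D : {set X}) (g : X -> R) :
  C \subset D ->
  \sum_(S in D) (if S \in C then g S else 0) = \sum_(S in C) g S.
Proof.
move=> CD; rewrite big_mkcond [RHS]big_mkcond /=; apply: eq_bigr => S _.
case SC: (S \in C); case SD: (S \in D) => //=.
by rewrite (subsetP CD) in SD.
Qed.

Lemma bal_ineq (v : game R n) : (0 < n)%N -> BG v ->
  forall D w, set0 \notin D -> balancing_weights D w ->
  \sum_(S in D) w S * v S <= v [set: 'I_n].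
Proof.
move=> n0 Hv D w.
move: {2}#|D|.+1 (ltnSn #|D|) => k; elim: k D w => // k IH D w HDk D0 [wpos wsum].
pose i0 : 'I_n := Ordinal n0.
case: (classic (exists C, C \proper D /\ balanced R C)) =>
  [[C [CD [C0 [mu [mupos musum]]]]] | Hmin].
- pose mu' := fun S => if S \in C then mu S else 0.
  have CsubD := proper_sub CD.
  have [S1 S1C] : exists S1, S1 \in C.
    apply/set0Pn; apply/eqP => C0'; move/eqP: (musum i0).
    rewrite big_mkcond big1 => [|S _]; first by rewrite eq_sym oner_eq0.
    by rewrite C0' inE.
  have neg1 : - mu' S1 < 0 by rewrite oppr_lt0 /mu' S1C mupos.
  have [s [spos Hnn [S0 S0D HS0]]] := @ratio_min _ D w (fun S => - mu' S) wpos
     (ex_intro2 _ _ S1 (subsetP CsubD _ S1C) neg1).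
  pose f := fun S => w S + s * - mu' S.
  have fsum : forall i : 'I_n, \sum_(S in D | i \in S) f S = 1 - s.
    move=> i; rewrite /f big_split /=.
    rewrite wsum (eq_bigr (fun S => - (s * mu' S))) => [|S _]; last by rewrite mulrN.
    rewrite sumrN -mulr_sumr /mu' sum_restrict // musum mulr1 //.
  have s1 : 0 < 1 - s.
    case/properP: CD => _ [S2 S2D S2C].
    have : S2 != set0 by apply: contraNneq D0 => <-.
    case/set0Pn => i iS2.
    rewrite -(fsum i) (bigD1 S2) /=; last by rewrite S2D.
    apply: (lt_le_trans (_ : 0 < f S2)).
      by rewrite /f /mu' (negbTE S2C) oppr0 mulr0 addr0 wpos.
    rewrite lerDl sumr_ge0 // => S /andP[/andP[SD _] _]; exact: Hnn.
  pose w2 := fun S => f S / (1 - s).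
  pose D' := [set S in D | w2 S != 0].
  have D'D : D' \proper D.
    apply/properP; split; first by apply/subsetP => S; rewrite inE => /andP[].
    exists S0 => //; rewrite inE S0D /= /w2 negbK.
    by rewrite /f HS0 mul0r.
  have IH1 := IH C mu.
  have IH2 := IH D' w2.
  have := IH1 (leq_trans (proper_card CD) HDk) C0 (conj mupos musum).
  have := IH2 (leq_trans (proper_card D'D) HDk).
  have D'0 : set0 \notin D'.
    by rewrite inE negb_and D0.
  move=> /(_ D'0) H2 H1.
  have {}H2 : \sum_(S in D') w2 S * v S <= v [set: 'I_n].
    apply: H2; split.
      move=> S; rewrite inE => /andP[SD w2S].
      rewrite lt_def w2S /= /w2 divr_ge0 ?(ltW s1) //; exact: Hnn.
    move=> i; rewrite sum_drop0 /w2 -mulr_suml fsum divff //.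
    by rewrite gt_eqF.
  rewrite sum_drop0' in H2.
  have -> : \sum_(S in D) w S * v S =
     (1 - s) * \sum_(S in D) w2 S * v S + s * \sum_(S in C) mu S * v S.
    rewrite -(sum_restrict0 (fun S => mu S * v S) CsubD).
    rewrite !mulr_sumr -big_split /=; apply: eq_bigr => S _.
    have s10 : 1 - s != 0 by rewrite gt_eqF.
    by rewrite /w2 /f /mu'; case: (S \in C); field.
  apply: (le_trans (y := (1 - s) * v [set: 'I_n] + s * v [set: 'I_n])).
    by apply: lerD; apply: ler_wpM2l => //; [exact: ltW s1 | exact: ltW spos].
  by rewrite -mulrDl subrK mul1r.
- have Dbal : balanced R D by split => //; exists w.
  have Dmin : minimal_balanced R D.
    by split => // C CD Cbal; apply: Hmin; exists C.
  case: (eqVneq D [set [set: 'I_n]]) => [DT | DT].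
    have := wsum i0; rewrite DT big_mkcondr big_set1 /= in_setT => wT.
    by rewrite big_set1 wT mul1r.
  exact: Hv.2 D w (conj Dmin DT) (conj wpos wsum).
Qed.


Lemma mb_indep B (c : {set 'I_n} -> R) : minimal_balanced R B ->
  \sum_(T in B) c T *: chi T = 0 -> forall T, T \in B -> c T = 0.
Proof.
move=> [[B0 [lam [lampos lamsum]]] Bmin].
have key : forall c' : {set 'I_n} -> R, \sum_(T in B) c' T *: chi T = 0 ->
    (exists2 T, T \in B & c' T < 0) -> False.
  move=> c' Hc Hneg.
  have [s [spos Hnn [T0 T0B HT0]]] := ratio_min lampos Hneg.
  pose l2 := fun T => lam T + s * c' T.
  apply: (Bmin [set T in B | l2 T != 0]).
    apply/properP; split; first by apply/subsetP => T; rewrite inE => /andP[].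
    by exists T0 => //; rewrite inE T0B /= negbK /l2 HT0.
  split; first by rewrite inE negb_and B0.
  exists l2; split.
    move=> T; rewrite inE => /andP[TB lT]; rewrite lt_def lT /=; exact: Hnn.
  move=> i; rewrite sum_drop0 /l2 big_split /= lamsum -mulr_sumr.
  by rewrite -sum_chiE Hc mxE mulr0 addr0.
move=> Hc T1 T1B; case: (ltrgtP (c T1) 0) => // H.
  by exfalso; apply: (key c) => //; exists T1.
exfalso; apply: (key (fun T => - c T)).
  by rewrite (eq_bigr (fun T => - (c T *: chi T))) ?sumrN ?Hc ?oppr0 // => T _; rewrite scaleNr.
by exists T1 => //; rewrite oppr_lt0.
Qed.


Definition MB B : 'M[R]_(#|B|, n) := \matrix_(i, j) chi (enum_val i) 0 j.

Lemma rowMB B i : row i (MB B) = chi (enum_val i).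
Proof. by apply/rowP => j; rewrite !mxE. Qed.

Lemma mulMB B T0 (T0B : T0 \in B) (u : 'rV_#|B|) :
  u *m MB B = \sum_(T in B) u 0 (enum_rank_in T0B T) *: chi T.
Proof.
rewrite mulmx_sum_row [RHS]big_enum_val /=; apply: eq_bigr => i _.
by rewrite rowMB enum_valK_in.
Qed.

Lemma MB_dot B d : MB B *m d^T = 0 -> forall T, T \in B -> dot (chi T) d = 0.
Proof.
move=> H T TB.
have -> : chi T = row (enum_rank_in TB T) (MB B) by rewrite rowMB enum_rankK_in.
by rewrite /dot -row_mul H !mxE.
Qed.

Lemma MB_dot2 B (y : 'cV[R]_n) T (TB : T \in B) :
  (MB B *m y) (enum_rank_in TB T) 0 = \sum_(j in T) y j 0.
Proof.
have -> : (MB B *m y) (enum_rank_in TB T) 0 = (chi T *m y) 0 0.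
  have -> : chi T = row (enum_rank_in TB T) (MB B) by rewrite rowMB enum_rankK_in.
  by rewrite -row_mul [RHS]mxE.
rewrite mxE [RHS]big_mkcond /=; apply: eq_bigr => j _; rewrite mxE.
by case: (j \in T); rewrite ?mul1r ?mul0r.
Qed.

Lemma MB_free B : minimal_balanced R B -> row_free (MB B).
Proof.
move=> Bmin; rewrite -kermx_eq0; apply/eqP/row_matrixP => i; rewrite row0.
have T0B : enum_val i \in B by apply: enum_valP.
set r := row i _.
have Hr : r *m MB B = 0 by rewrite /r -row_mul mulmx_ker row0.
rewrite (mulMB T0B) in Hr.
have H := mb_indep Bmin Hr.
apply/rowP => j; rewrite mxE.
by have := H _ (enum_valP j); rewrite enum_valK_in /r !mxE.
Qed.

Lemma card_B B : minimal_balanced R B -> (#|B| <= n)%N.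
Proof.
move=> Bmin; have := MB_free Bmin; rewrite /row_free => /eqP <-.
exact: rank_leq_col.
Qed.

Lemma ker_nz m (M : 'M[R]_(m, n)) : (\rank M < n)%N ->
  exists d : 'rV_n, d != 0 /\ M *m d^T = 0.
Proof.
move=> Hr; set K := kermx M^T.
have : K != 0.
  rewrite -mxrank_eq0 mxrank_ker mxrank_tr; apply/eqP => /eqP.
  by rewrite subn_eq0 leqNgt Hr.
case/eqP/matrixP/(not_all_ex_not _ _) => i /(not_all_ex_not _ _) [j Hij].
exists (row i K); split.
  apply/eqP => /rowP/(_ j) Hj; apply: Hij; move: Hj; rewrite [row i K 0 j]mxE => ->; by rewrite !mxE.
by rewrite -[M]trmxK -trmx_mul -row_mul mulmx_ker row0 trmx0.
Qed.


Lemma sum_except D wD (h : {set 'I_n} -> R) (x : {ffun 'I_n -> R}) S0 :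
  balancing_weights D wD -> S0 \in D ->
  (forall S, S \in D -> S != S0 -> h S = \sum_(i in S) x i) ->
  \sum_(S in D) wD S * h S =
    \sum_i x i + wD S0 * (h S0 - \sum_(i in S0) x i).
Proof.
move=> [_ wsum] S0D Hh.
rewrite -(bal_sum x wsum).
have -> : \sum_(S in D) wD S * h S = \sum_(S in D) (wD S * (\sum_(i in S) x i)
    + wD S * (h S - \sum_(i in S) x i)).
  by apply: eq_bigr => S _; rewrite -mulrDr addrCA subrr addr0.
rewrite big_split /=; congr (_ + _).
rewrite (bigD1 S0) //= [X in _ + X]big1 ?addr0 // => S /andP[SD SS0].
by rewrite Hh // subrr mulr0.
Qed.

Lemma chi_setT B lam : balancing_weights B lam ->
  \sum_(T in B) lam T *: chi T = chi [set: 'I_n].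
Proof.
move=> [_ lsum]; apply/rowP => i; rewrite sum_chiE lsum !mxE in_setT //.
Qed.

Lemma extend B W (lam mu a : {set 'I_n} -> R) :
  balancing_weights B lam -> [disjoint W & B] ->
  (forall S, S \in W -> 0 < mu S) ->
  \sum_(S in W) mu S *: chi S = \sum_(T in B) a T *: chi T ->
  exists wD : {set 'I_n} -> R, balancing_weights (W :|: B) wD.
Proof.
move=> [lpos lsum] WB mupos Heq.
pose t := 1 + \sum_(T in B) `|a T| / lam T.
have t_ge0 : 0 <= \sum_(T in B) `|a T| / lam T.
  by apply: sumr_ge0 => T TB; rewrite divr_ge0 // ltW // lpos.
have tpos : 0 < t by rewrite /t ltr_pwDl.
have WBn : forall S, S \in B -> S \notin W.
  by move=> S SB; apply: contraTN SB => SW; rewrite (disjointFr WB SW).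
exists (fun S => if S \in W then mu S / t else lam S - a S / t); split.
  move=> S; rewrite inE; case SW: (S \in W) => /= SB.
    by rewrite divr_gt0 // mupos.
  rewrite subr_gt0 ltr_pdivrMr //.
  have lS := lpos _ SB.
  apply: (le_lt_trans (ler_norm (a S))).
  have -> : `|a S| = lam S * (`|a S| / lam S) by field; rewrite gt_eqF.
  rewrite ltr_pM2l // /t ltr_pwDl //.
  rewrite (bigD1 S) //= lerDl sumr_ge0 // => T /andP[TB _].
  by rewrite divr_ge0 // ltW // lpos.
have Hsplit : forall F : {set 'I_n} -> R,
    \sum_(S in W :|: B) F S = \sum_(S in W) F S + \sum_(S in B) F S.
  by move=> F; rewrite (eq_bigl [predU W & B]) ?bigU // => S; rewrite !inE.
move=> i; rewrite big_mkcondr /= Hsplit.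
rewrite (eq_bigr (fun S : {set 'I_n} => if i \in S then mu S / t else 0)) => [|S SW]; last first.
  by rewrite SW.
rewrite [X in _ + X](eq_bigr (fun S : {set 'I_n} => if i \in S then lam S - a S / t else 0)) => [|S SB]; last first.
  by rewrite (negbTE (WBn _ SB)).
rewrite -!big_mkcondr /= sumrB lsum -!mulr_suml.
have Hi : (\sum_(S in W) mu S *: chi S) 0 i = (\sum_(T in B) a T *: chi T) 0 i.
  by rewrite Heq.
rewrite !sum_chiE in Hi.
by rewrite Hi addrC subrK.
Qed.


Lemma sumT (x : {ffun 'I_n -> R}) : \sum_(i in [set: 'I_n]) x i = \sum_i x i.
Proof. by apply: eq_bigl => i; rewrite in_setT. Qed.

Lemma tight (v : game R n) B (lam : {set 'I_n} -> R) y :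
  balancing_weights B lam -> in_core v y ->
  \sum_(S in B) lam S * v S = v [set: 'I_n] ->
  forall T, T \in B -> \sum_(i in T) y i = v T.
Proof.
move=> [lpos lsum] [ycore ytot] Heq.
have H0 : \sum_(S in B) lam S * (\sum_(i in S) y i - v S) = 0.
  rewrite (eq_bigr (fun S => lam S * (\sum_(i in S) y i) - lam S * v S)) => [|S _].
    by rewrite sumrB bal_sum // Heq -ytot sumT subrr.
  by rewrite mulrBr.
move=> T TB; apply/eqP; rewrite -subr_eq0; apply/eqP.
have := psumr_eq0P _ H0 TB.
  move=> /(_ _)/eqP; rewrite mulf_eq0 gt_eqF ?lpos //= => H; apply/eqP; apply: H.
move=> S SB; apply: mulr_ge0; [exact: ltW (lpos _ SB) | rewrite subr_ge0; exact: ycore].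
Qed.

Lemma bal_nonempty B (lam : {set 'I_n} -> R) : (0 < n)%N ->
  balancing_weights B lam -> exists T, T \in B.
Proof.
move=> n0 [_ lsum]; apply/set0Pn; apply/eqP => B0.
move/eqP: (lsum (Ordinal n0)); rewrite big_mkcond big1 => [|S _].
  by rewrite eq_sym oner_eq0.
by rewrite B0 inE.
Qed.

Lemma part1 (v : game R n) B (lam : {set 'I_n} -> R) : (0 < n)%N ->
  Bstar R B -> balancing_weights B lam -> #|B| = n -> facet B lam v ->
  core_single_point v.
Proof.
move=> n0 [Bmin BT] Hlam HcB [Hv Heq].
have [T0 T0B] := bal_nonempty n0 Hlam.
have Bfree := MB_free Bmin.
have Bfull : row_full (MB B) by rewrite /row_full (eqP Bfree) HcB.
have [P HP] := row_freeP Bfree.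
have [Q HQ] := row_fullP Bfull.
pose b : 'cV_#|B| := \col_i v (enum_val i).
pose xc := P *m b.
pose x : {ffun 'I_n -> R} := [ffun j => xc j 0].
have xB : forall T, T \in B -> \sum_(j in T) x j = v T.
  move=> T TB; rewrite (eq_bigr (fun j => xc j 0)) => [|j _]; last by rewrite ffunE.
  by rewrite -(MB_dot2 xc TB) /xc mulmxA HP mul1mx mxE enum_rankK_in.
have xtot : \sum_i x i = v [set: 'I_n].
  rewrite -(bal_sum x Hlam.2) -Heq; apply: eq_bigr => S SB; by rewrite xB.
exists x => y; split.
- move=> ycore; have yB := tight Hlam ycore Heq.
  pose yc : 'cV_n := \col_j y j.
  have : MB B *m yc = MB B *m xc.
    apply/colP => i; have TB := enum_valP i.
    rewrite -(enum_valK_in TB i) (MB_dot2 yc TB) (MB_dot2 xc TB).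
    rewrite (eq_bigr (fun j => y j)) => [|j _]; last by rewrite mxE.
    rewrite [RHS](eq_bigr (fun j => x j)) => [|j _]; last by rewrite ffunE.
    by rewrite yB ?xB.
  move/(congr1 (mulmx Q)); rewrite !mulmxA HQ !mul1mx => Hyx.
  apply/ffunP => j; have := congr1 (fun M : 'cV_n => M j 0) Hyx.
  by rewrite /= ffunE [in X in X -> _]mxE [xc _ _]mxE.
- move=> ->; split; last by rewrite sumT.
  move=> S; case: (eqVneq S set0) => [-> | S0]; first by rewrite big_set0 Hv.1.
  case SB: (S \in B); first by rewrite xB.
  have : (chi S <= MB B)%MS by apply: submx_full.
  case/submxP => u Hu; rewrite (mulMB T0B) in Hu.
  have Hd : [disjoint [set S] & B] by rewrite disjoints1 SB.
  have Hmu : \sum_(S' in [set S]) (fun _ => 1) S' *: chi S' =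
     \sum_(T in B) u 0 (enum_rank_in T0B T) *: chi T by rewrite big_set1 scale1r.
  have [wD Hw] := extend Hlam Hd (fun _ _ => ltr01) Hmu.
  have D0 : set0 \notin [set S] :|: B.
    by rewrite !inE negb_or eq_sym S0 /=; case: Bmin => [[]].
  have H := bal_ineq n0 Hv D0 Hw.
  rewrite (sum_except (x := x) (S0 := S) Hw) in H; last 2 first.
  + by rewrite !inE eqxx.
  + move=> S' ; rewrite !inE => /orP[/eqP -> | S'B]; first by rewrite eqxx.
    by rewrite xB.
  rewrite xtot -[X in _ <= X]addr0 lerD2l pmulr_rle0 ?subr_le0 // in H.
  by case: Hw => /(_ S) -> //; rewrite !inE eqxx.
Qed.


Lemma dotDl u1 u2 d : dot (u1 + u2) d = dot u1 d + dot u2 d.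
Proof. by rewrite /dot mulmxDl mxE. Qed.

Lemma dotZl c u d : dot (c *: u) d = c * dot u d.
Proof. by rewrite /dot -scalemxAl mxE. Qed.

Lemma dotNr u d : dot u (- d) = - dot u d.
Proof.
rewrite /dot (_ : (- d)^T = - d^T); last by apply/matrixP => i j; rewrite !mxE.
by rewrite mulmxN mxE.
Qed.

Lemma dot_sumG (I : finType) (W : {set I}) (mu : I -> R) (a : I -> 'rV[R]_n) d :
  dot (\sum_(S in W) mu S *: a S) d = \sum_(S in W) mu S * dot (a S) d.
Proof.
rewrite /dot mulmx_suml summxE; apply: eq_bigr => S _.
by rewrite -scalemxAl mxE.
Qed.

Lemma dot_ker m (M : 'M[R]_(m, n)) u d : M *m d^T = 0 -> dot (u *m M) d = 0.
Proof. by move=> H; rewrite /dot -mulmxA H mulmx0 mxE. Qed.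

Lemma col_decomp m (M : 'M[R]_(m, n)) (r : 'rV_n) (D : 'rV_(m + 1)) :
  exists (u : 'rV_m) (c : R), D *m col_mx M r = u *m M + c *: r.
Proof.
rewrite -[D]hsubmxK mul_row_col; exists (lsubmx D), (rsubmx D 0 0).
by congr (_ + _); rewrite {1}[rsubmx D]mx11_scalar mul_scalar_mx.
Qed.

Lemma farkas (I : finType) (a : I -> 'rV[R]_n) (W : {set I}) m (M : 'M[R]_(m, n)) :
  (exists d : 'rV_n, d != 0 /\ M *m d^T = 0) ->
  (exists d : 'rV_n, [/\ d != 0, M *m d^T = 0 &
       forall S, S \in W -> 0 <= dot (a S) d])
  \/ (exists mu : I -> R, [/\ forall S, S \in W -> 0 <= mu S,
        exists2 S, S \in W & 0 < mu S &
        ((\sum_(S in W) mu S *: a S)%R <= M)%MS]).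
Proof.
move: {2}#|W|.+1 (ltnSn #|W|) => k; elim: k W m M => // k IH W m M HWk Hker.
case: (set_0Vmem W) => [W0 | [a0 a0W]].
  left; case: Hker => d [dnz Md]; exists d; split => // S; by rewrite W0 inE.
pose W0 := W :\ a0.
have HW0 : (#|W0| < k)%N.
  by move: HWk; rewrite (cardsD1 a0 W) a0W.
have W0W : forall S, S \in W0 -> S \in W by move=> S; rewrite /W0 in_setD1 => /andP[].
have W0n : forall S, S \in W0 -> S != a0 by move=> S; rewrite /W0 in_setD1 => /andP[].
have Hsplit : forall F : I -> 'rV[R]_n,
    \sum_(S in W) F S = F a0 + \sum_(S in W0) F S.
  move=> F; rewrite (bigD1 a0) //=; congr (_ + _); apply: eq_bigl => S.
  by rewrite /W0 in_setD1 andbC.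
case: (IH W0 m M HW0 Hker) => [[d0 [d0nz Md0 Hd0]] | [mu [mupos [S1 S1W0 muS1] Hmu]]];
    last first.
  right; exists (fun S => if S == a0 then 0 else mu S); split.
  - move=> S SW; case: eqP => [_|Sa]; first by [].
    by apply: mupos; rewrite /W0 in_setD1 SW andbT; apply/eqP.
  - by exists S1; [exact: W0W | rewrite (negbTE (W0n _ S1W0))].
  - rewrite Hsplit eqxx scale0r add0r.
    rewrite (eq_bigr (fun S => mu S *: a S)) // => S SW0.
    by rewrite (negbTE (W0n _ SW0)).
case: (leP 0 (dot (a a0) d0)) => Hda0.
  left; exists d0; split => // S SW; case: (eqVneq S a0) => [-> //|Sa].
  by apply: Hd0; rewrite /W0 in_setD1 Sa SW.
pose M' := col_mx M (a a0).
case: (ltnP (\rank M') n) => Hr.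
  case: (IH W0 _ M' HW0 (ker_nz Hr)) =>
     [[d [dnz Md Hd]] | [mu [mupos [S1 S1W0 muS1] Hmu]]].
    move: Md; rewrite /M' mul_col_mx => /eqP; rewrite col_mx_eq0 => /andP[/eqP Md /eqP ad].
    left; exists d; split => // S SW; case: (eqVneq S a0) => [->|Sa].
      by rewrite /dot ad mxE.
    by apply: Hd; rewrite /W0 in_setD1 Sa SW.
  case/submxP: Hmu => D HD.
  have [u [c Huc]] := col_decomp M (a a0) D.
  rewrite Huc in HD.
  case: (lerP c 0) => Hc.
    right; exists (fun S => if S == a0 then - c else mu S); split.
    - move=> S SW; case: eqP => [_|Sa]; first by rewrite oppr_ge0.
      by apply: mupos; rewrite /W0 in_setD1 SW andbT; apply/eqP.
    - by exists S1; [exact: W0W | rewrite (negbTE (W0n _ S1W0))].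
    - rewrite Hsplit eqxx.
      rewrite (eq_bigr (fun S => mu S *: a S)) => [|S SW0]; last first.
        by rewrite (negbTE (W0n _ SW0)).
      by rewrite HD scaleNr addrC -addrA subrr addr0 submxMl.
  exfalso.
  have := congr1 (fun r => dot r d0) HD; rewrite /= dot_sumG dotDl dotZl dot_ker //.
  rewrite add0r => Hs.
  have : 0 <= \sum_(S in W0) mu S * dot (a S) d0.
    by apply: sumr_ge0 => S SW0; apply: mulr_ge0; [exact: mupos | exact: Hd0].
  by rewrite Hs leNgt (pmulr_rlt0 _ Hc) Hda0.
have Mfull : row_full M'.
  by rewrite /row_full eqn_leq rank_leq_col Hr.
case: (classic (forall S, S \in W0 -> 0 <= dot (a S) (- d0))) => Hneg.
  left; exists (- d0); split.
  - by rewrite oppr_eq0.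
  - rewrite (_ : (- d0)^T = - d0^T); last by apply/matrixP => i j; rewrite !mxE.
    by rewrite mulmxN Md0 oppr0.
  - move=> S SW; case: (eqVneq S a0) => [->|Sa].
      by rewrite dotNr oppr_ge0 ltW.
    by apply: Hneg; rewrite /W0 in_setD1 Sa SW.
have [b [bW0 Hb]] : exists b, b \in W0 /\ 0 < dot (a b) d0.
  apply: NNPP => Hno; apply: Hneg => S SW0; rewrite dotNr oppr_ge0.
  by rewrite leNgt; apply/negP => HS; apply: Hno; exists S.
have : (a b <= M')%MS by apply: submx_full.
case/submxP => D HD.
have [u [c Huc]] := col_decomp M (a a0) D.
rewrite Huc in HD.
have Hc : c < 0.
  have := congr1 (fun r => dot r d0) HD; rewrite /= dotDl dotZl dot_ker // add0r.
  move=> Hs; rewrite Hs in Hb.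
  by rewrite ltNge; apply/negP => Hc0; move: Hb; rewrite ltNge (mulr_ge0_le0 Hc0 (ltW Hda0)).
right; exists (fun S => if S == a0 then - c else if S == b then 1 else 0); split.
- move=> S SW; case: eqP => [_|Sa]; first by rewrite oppr_ge0 ltW.
  by case: eqP.
- by exists a0 => //; rewrite eqxx oppr_gt0.
- rewrite Hsplit eqxx (bigD1 b) //= (negbTE (W0n _ bW0)) eqxx scale1r.
  rewrite big1 ?addr0 => [|S /andP[SW0 Sb]]; last first.
    by rewrite (negbTE (W0n _ SW0)) (negbTE Sb) scale0r.
  by rewrite HD scaleNr addrC -addrA subrr addr0 submxMl.
Qed.


Lemma facet_down (v : game R n) B (lam : {set 'I_n} -> R) S0 (del : R) :
  facet B lam v -> S0 \notin B -> S0 != set0 -> S0 != [set: 'I_n] -> 0 <= del ->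
  facet B lam [ffun S => v S - (S == S0)%:R * del].
Proof.
move=> [[v0 Hv] Heq] S0B S00 S0T del0.
have vT : [ffun S => v S - (S == S0)%:R * del] [set: 'I_n] = v [set: 'I_n].
  by rewrite ffunE eq_sym (negbTE S0T) mul0r subr0.
split; first split.
- by rewrite ffunE eq_sym (negbTE S00) mul0r subr0.
- move=> C lamC HC [lCpos lCsum]; rewrite vT.
  apply: le_trans (Hv C lamC HC (conj lCpos lCsum)).
  apply: ler_sum => S SC; rewrite ffunE ler_pM2l ?lCpos //.
  by rewrite lerBlDr lerDl mulr_ge0.
- rewrite vT -Heq; apply: eq_bigr => S SB; rewrite ffunE.
  case: (eqVneq S S0) => [E|]; last by rewrite mul0r subr0.
  by move: SB; rewrite E (negbTE S0B).
Qed.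

Lemma part2 (v : game R n) B (lam : {set 'I_n} -> R) : (0 < n)%N ->
  Bstar R B -> balancing_weights B lam -> #|B| <> n ->
  rel_interior (facet B lam) v -> ~ core_single_point v.
Proof.
move=> n0 [Bmin BT] Hlam HcB [[Hv Heq] [eps [epspos Heps]]] [x0 Hx].
have xcore : in_core v x0 by apply/Hx.
have Bn : (#|B| < n)%N by rewrite ltn_neqAle card_B // andbT; apply/eqP.
have Hker : exists d : 'rV_n, d != 0 /\ MB B *m d^T = 0.
  by apply: ker_nz; apply: leq_ltn_trans (rank_leq_row _) Bn.
pose W := [set S | [&& S \notin B, S != set0, S != [set: 'I_n] &
                       v S == \sum_(i in S) x0 i]].
have B0 : set0 \notin B by case: Bmin => [[]].
have [T0 T0B] := bal_nonempty n0 Hlam.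
case: (farkas (@chi) W Hker) =>
   [[d [dnz Md Hd]] | [mu [mupos [S0 S0W muS0] Hmu]]].
- have dB := MB_dot Md.
  have dT : dot (chi [set: 'I_n]) d = 0.
    by rewrite -(chi_setT Hlam) dot_sum big1 // => T TB; rewrite dB // mulr0.
  pose Dn := 1 + \sum_i `|d 0 i|.
  pose NT := [set S | v S < \sum_(i in S) x0 i].
  pose K := 1 + \sum_(S in NT) Dn / (\sum_(i in S) x0 i - v S).
  have Dnpos : 0 < Dn by rewrite /Dn ltr_pwDl // sumr_ge0.
  have K1 : forall S, S \in NT -> Dn / (\sum_(i in S) x0 i - v S) <= K.
    move=> S SNT; rewrite /K (bigD1 S) //= addrCA lerDl addr_ge0 //.
    apply: sumr_ge0 => T /andP[TN _]; rewrite divr_ge0 ?ltW //.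
    by rewrite subr_gt0; move: TN; rewrite inE.
  have Kpos : 0 < K.
    rewrite /K ltr_pwDl // sumr_ge0 // => S; rewrite inE => HS.
    by rewrite divr_ge0 ?ltW // subr_gt0.
  pose e := K^-1.
  have epos : 0 < e by rewrite invr_gt0.
  pose y : {ffun 'I_n -> R} := [ffun i => x0 i + e * d 0 i].
  have ySum : forall S : {set 'I_n}, \sum_(i in S) y i = \sum_(i in S) x0 i + e * dot (chi S) d.
    move=> S; rewrite dot_chi mulr_sumr -big_split /=; apply: eq_bigr => i _.
    by rewrite ffunE.
  have ycore : in_core v y.
    split; last by rewrite ySum dT mulr0 addr0; exact: xcore.2.
    move=> S; rewrite ySum.
    case: (eqVneq S set0) => [->|Sn0].
      by rewrite dot_chi [X in e * X]big_set0 mulr0 addr0; exact: xcore.1.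
    case SB: (S \in B); first by rewrite dB // mulr0 addr0; exact: xcore.1.
    case: (eqVneq S [set: 'I_n]) => [->|SnT].
      by rewrite dT mulr0 addr0; exact: xcore.1.
    case: (eqVneq (v S) (\sum_(i in S) x0 i)) => Hs.
      have SW : S \in W by rewrite inE SB Sn0 SnT Hs eqxx.
      by rewrite Hs lerDl; apply: mulr_ge0; [exact: ltW epos | exact: Hd].
    have Hlt : v S < \sum_(i in S) x0 i by rewrite lt_neqAle Hs xcore.1.
    have SNT : S \in NT by rewrite inE.
    have Hn : `|dot (chi S) d| <= Dn.
      rewrite dot_chi (le_trans (ler_norm_sum _ _ _)) // /Dn.
      apply: le_trans (ler_wpDl ler01 (lexx _)).
      rewrite [X in _ <= X](bigID (fun i => i \in S)) /= lerDl sumr_ge0 //.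
    have HK := K1 S SNT.
    rewrite ler_pdivrMr ?subr_gt0 // in HK.
    apply: (le_trans (y := \sum_(i in S) x0 i - e * `|dot (chi S) d|)).
      rewrite lerBrDr addrC -lerBrDr.
      apply: (@le_trans _ _ (e * Dn)); first by rewrite ler_pM2l.
      by rewrite /e mulrC ler_pdivrMr // mulrC.
    rewrite lerD2l -mulrN ler_pM2l // lerNl.
    by rewrite -normrN ler_norm.
  have Hy := (Hx y).1 ycore.
  move/eqP: dnz; apply; apply/rowP => i; rewrite mxE.
  have := congr1 (fun f : {ffun 'I_n -> R} => f i) Hy; rewrite /= ffunE.
  move/eqP; rewrite -subr_eq0 addrC addKr mulf_eq0 invr_eq0 gt_eqF //=.
  by move/eqP.
- case/submxP: Hmu => u Hu; rewrite (mulMB T0B) in Hu.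
  pose Wp := [set S in W | 0 < mu S].
  have HWp : \sum_(S in Wp) mu S *: chi S = \sum_(S in W) mu S *: chi S.
    rewrite big_mkcond [RHS]big_mkcond /=; apply: eq_bigr => S _.
    rewrite inE; case SW: (S \in W) => //=; case: ltP => // Hm.
    by rewrite (@le_anti _ _ (mu S) 0) ?Hm ?mupos ?scale0r.
  rewrite -HWp in Hu.
  have Hd : [disjoint Wp & B].
    rewrite -setI_eq0; apply/eqP/setP => S; rewrite !inE.
    by case: (S \in B); rewrite ?andbF.
  have mupos' : forall S, S \in Wp -> 0 < mu S by move=> S; rewrite inE => /andP[].
  have [wD Hw] := extend Hlam Hd mupos' Hu.
  have D0 : set0 \notin Wp :|: B by rewrite !inE negb_or B0 !eqxx !andbF.
  move: S0W; rewrite inE => /and4P[S0B S00 S0T /eqP vS0].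
  have S0Wp : S0 \in Wp by rewrite !inE S0B S00 S0T vS0 eqxx muS0.
  pose del := eps / 2.
  have delpos : 0 < del by rewrite divr_gt0.
  pose w : game R n := [ffun S => v S + (S == S0)%:R * del].
  pose v' : game R n := [ffun S => v S - (S == S0)%:R * del].
  have Fv' : facet B lam v'.
    by apply: facet_down => //; exact: ltW.
  have Fw : facet B lam w.
    apply: Heps.
      exists 2%N, (fun k : 'I_2 => if k == ord0 then 2 else -1),
        (fun k : 'I_2 => if k == ord0 then v else v'); split.
        by move=> k; case: ifP => _ //; split.
      split; first by rewrite big_ord_recl big_ord1 /=; ring.
      by move=> S; rewrite big_ord_recl big_ord1 /= !ffunE; ring.
    move=> S; rewrite ffunE addrC addKr normrM.
    case: eqP => _; rewrite ?normr0 ?mul0r ?normr1 ?mul1r // ger0_norm ?ltW //.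
    by rewrite /del ltr_pdivrMr // ltr_pMr // ltr1n.
  have := bal_ineq n0 Fw.1 D0 Hw.
  rewrite (sum_except (x := x0) (S0 := S0) Hw); last 2 first.
  + by rewrite in_setU S0Wp.
  + move=> S; rewrite inE => /orP[SWp | SB] SS0; rewrite ffunE (negbTE SS0) mul0r addr0.
      by move: SWp; rewrite !inE => /andP[/and4P[_ _ _ /eqP]].
    by rewrite (tight Hlam xcore Heq SB).
  have xT : \sum_i x0 i = w [set: 'I_n].
    by rewrite ffunE eq_sym (negbTE S0T) mul0r addr0 -xcore.2 sumT.
  rewrite xT -[X in _ <= X]addr0 lerD2l ffunE eqxx mul1r vS0 addrC addKr.
  rewrite pmulr_rle0 ?lt_geF //.
  by case: Hw => /(_ S0) -> //; rewrite in_setU S0Wp.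
Qed.

End S.

Unset Implicit Arguments.

Theorem theorem17 (R : realFieldType) (n : nat) (B : {set {set 'I_n}})
  (lam : {set 'I_n} -> R) :
  (0 < n)%N -> Bstar R B -> balancing_weights B lam ->
  (#|B| = n -> forall v : game R n, facet B lam v -> core_single_point v) /\
  (#|B| <> n -> forall v : game R n,
      rel_interior (facet B lam) v -> ~ core_single_point v).
Proof.
move=> n0 HB Hlam; split.
- by move=> HcB v Hf; exact: (part1 n0 HB Hlam HcB Hf).
- by move=> HcB v Hri; exact: (part2 n0 HB Hlam HcB Hri).
Qed.
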